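(* Let $q$ be a prime power and let $\mathcal{F}=(\mathcal{F}_1,\ldots,\mathcal{F}_r)$ be a flag on $\mathbb{F}_{q^n}$. Then $$\mathrm{Stab}^+(\mathcal{F})=\mathrm{Stab}(\mathcal{F})\cup\{0\}=\bigcap_{i=1}^r\mathrm{Stab}^+(\mathcal{F}_i),$$ and every subspace $\mathcal{F}_i$ is a vector space over $\mathrm{Stab}^+(\mathcal{F})$. Moreover, if $1\in\mathcal{F}_1$, then $\mathrm{Stab}^+(\mathcal{F})$ is contained in every subspace $\mathcal{F}_i$, $1\le i\le r$.
   Context: $\mathbb{F}_{q^n}$ is regarded as an $\mathbb{F}_q$-vector space. A flag on $\mathbb{F}_{q^n}$ is a sequence $(\mathcal{F}_1,\ldots,\mathcal{F}_r)$ of $\mathbb{F}_q$-subspaces with $\{0\}\subsetneq\mathcal{F}_1\subsetneq\cdots\subsetneq\mathcal{F}_r\subsetneq\mathbb{F}_{q^n}$. For $\gamma\in\mathbb{F}_{q^n}^*$ and an $\mathbb{F}_q$-subspace $\mathcal{U}$, $\mathcal{U}\gamma=\{u\gamma:u\in\mathcal{U}\}$, and $\mathcal{F}\gamma=(\mathcal{F}_1\gamma,\ldots,\mathcal{F}_r\gamma)$. The stabilizers under the full group $\mathbb{F}_{q^n}^*$ are $\mathrm{Stab}(\mathcal{U})=\{\gamma\in\mathbb{F}_{q^n}^*:\mathcal{U}\gamma=\mathcal{U}\}$ and $\mathrm{Stab}(\mathcal{F})=\{\gamma\in\mathbb{F}_{q^n}^*:\mathcal{F}\gamma=\mathcal{F}\}$.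 The stabilizer subfield $\mathrm{Stab}^+(\mathcal{U})$ (resp. $\mathrm{Stab}^+(\mathcal{F})$) is the smallest subfield of $\mathbb{F}_{q^n}$ containing both $\mathbb{F}_q$ and $\mathrm{Stab}(\mathcal{U})$ (resp. $\mathrm{Stab}(\mathcal{F})$). *)

(* Defs.v *)
From HB Require Import structures.
From mathcomp Require Import all_boot all_order all_algebra all_field.
Set Implicit Arguments. Unset Strict Implicit. Unset Printing Implicit Defensive.
Import GRing.Theory.
Local Open Scope ring_scope.

(* Setting: F plays the role of F_q (any finite field, so q = #|F| is a prime
   power), L plays the role of F_{q^n} (any finite extension of F, n = \dim L),
   regarded as an F-vector space; F_q-subspaces are {vspace L}. *)

Section StabDefs.
Variables (F : finFieldType) (L : fieldExtType F).

Definition vsmul (U : {vspace L}) (g : L) : {vspace L} := (amulr g @: U)%VS.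

Definition Stab (U : {vspace L}) : pred L :=
  fun g => (g != 0) && (vsmul U g == U).

Definition StabFlag (r : nat) (Fl : 'I_r -> {vspace L}) : pred L :=
  fun g => (g != 0) && [forall i, vsmul (Fl i) g == Fl i].

Definition elems (P : pred L) : seq L :=
  [seq x : L | x <- enum [pred y : finvect_type L | P y]].

(* Stab^+: the smallest subfield of L containing F (i.e. 1%VS) and the given
   set of elements: the F-algebra generated by them (in the finite extension L
   the F-subalgebras are exactly the subfields containing F). *)
Definition StabPlus_of (P : pred L) : {aspace L} := (<< 1%VS & elems P >>)%AS.

Definition StabPlus (U : {vspace L}) : {aspace L} := StabPlus_of (Stab U).

Definition StabPlusFlag (r : nat) (Fl : 'I_r -> {vspace L}) : {aspace L} :=
  StabPlus_of (StabFlag Fl).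

Definition is_flag (r : nat) (Fl : 'I_r -> {vspace L}) : Prop :=
  (forall i : 'I_r, Fl i != 0%VS /\ Fl i != fullv) /\
  (forall i j : 'I_r, (i < j)%N -> (Fl i <= Fl j)%VS /\ Fl i != Fl j).

End StabDefs.

(* Main.v *)
Require Import Defs.
From HB Require Import structures.
From mathcomp Require Import all_boot all_order all_algebra all_field.
Import GRing.Theory.
Local Open Scope ring_scope.

Section Helpers.
Variables (F : finFieldType) (L : fieldExtType F).

Lemma vsmul_subP (U : {vspace L}) x :
  reflect (forall u, u \in U -> u * x \in U) (vsmul U x <= U)%VS.
Proof.
apply: (iffP subvP) => [H u Uu | H y /memv_imgP[u Uu ->]].
  by have := H (amulr x u) (memv_img _ Uu); rewrite lfunE.
by rewrite lfunE /=; apply: H.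
Qed.

Lemma vsmul_eq (U : {vspace L}) x :
  x != 0 -> (vsmul U x == U) = (vsmul U x <= U)%VS.
Proof.
move=> nz; rewrite eqEdim; case: (_ <= _)%VS => //=.
have /eqP Hk : lker (amulr x) == 0%VS.
  by apply: lker0_amulr; rewrite unitfE.
by rewrite /vsmul limg_dim_eq ?leqnn // Hk capv0.
Qed.

Lemma mem_elems (P : pred L) x : (x \in elems P) = P x.
Proof.
rewrite /elems; apply/mapP/idP => [[y]|Px].
  move=> Hy ->; have := Hy.
  by have -> := @mem_enum (finvect_type L) [pred y | P y] y.
by exists x => //; have -> := @mem_enum (finvect_type L) [pred y | P y] x.
Qed.

Lemma key (Q P : pred L) :
  Q 1 -> (forall x y, Q x -> Q y -> Q (x + y)) ->
  (forall a x, Q x -> Q (a *: x)) -> (forall x y, Q x -> Q y -> Q (x * y)) ->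
  (forall x, P x = (x != 0) && Q x) ->
  forall x, (x \in StabPlus_of P) = Q x.
Proof.
move=> Q1 QD QZ QM PE x.
have Q0 : Q 0 by rewrite -(scale0r 1); apply: QZ.
set V := <<elems Q>>%VS.
have QV y : (y \in V) = Q y.
  apply/idP/idP => [|Qy]; last by apply: memv_span; rewrite mem_elems.
  move/(coord_span (X := in_tuple (elems Q))) => ->.
  apply: (big_ind Q) => // i _; apply: QZ.
  by have := mem_nth 0 (ltn_ord i); rewrite mem_elems.
have V1 : (1 <= V)%VS by rewrite -memvE QV.
have sub : (StabPlus_of P <= V)%VS.
  apply: agenv_sub_modl => //; apply/prodvP => u v Uu Vv.
  have Uu' : u \in V.
    apply: subvP Uu; rewrite subv_add V1 /=; apply/span_subvP => y.
    by rewrite mem_elems PE QV => /andP[].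
  by rewrite QV; apply: QM => //; rewrite -QV.
apply/idP/idP => [Hx | Qx]; first by rewrite -QV; apply: (subvP sub).
case: (eqVneq x 0) => [->|nz]; first exact: mem0v.
by apply: seqv_sub_adjoin; rewrite mem_elems PE nz Qx.
Qed.

End Helpers.

Theorem proposition3p7 (F : finFieldType) (L : fieldExtType F) (r : nat)
  (Fl : 'I_r -> {vspace L}) :
  is_flag Fl ->
  [/\ forall x : L, (x \in StabPlusFlag Fl) = (x == 0) || StabFlag Fl x,
      (StabPlusFlag Fl : {vspace L}) =
        (\bigcap_(i < r) (StabPlus (Fl i) : {vspace L}))%VS,
      forall (i : 'I_r) (k u : L),
        k \in StabPlusFlag Fl -> u \in Fl i -> k * u \in Fl i
    & forall i0 : 'I_r, nat_of_ord i0 = 0%N -> 1 \in Fl i0 ->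
        forall i : 'I_r, (StabPlusFlag Fl <= Fl i)%VS].
Proof.
move=> [_ Hmono].
pose QU (U : {vspace L}) x := (vsmul U x <= U)%VS.
have QU1 U : QU U 1 by apply/vsmul_subP => u; rewrite mulr1.
have QUD U x y : QU U x -> QU U y -> QU U (x + y).
  move=> /vsmul_subP Hx /vsmul_subP Hy; apply/vsmul_subP => u Uu.
  by rewrite mulrDr memvD ?Hx ?Hy.
have QUZ U a x : QU U x -> QU U (a *: x).
  move=> /vsmul_subP Hx; apply/vsmul_subP => u Uu.
  by rewrite -scalerAr memvZ ?Hx.
have QUM U x y : QU U x -> QU U y -> QU U (x * y).
  move=> /vsmul_subP Hx /vsmul_subP Hy; apply/vsmul_subP => u Uu.
  by rewrite mulrA Hy ?Hx.
pose Q x := [forall i, QU (Fl i) x].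
have hU U x : x \in StabPlus U = QU U x.
  apply: key => //; first exact: QUD; first exact: QUZ; first exact: QUM.
  by move=> y; rewrite /Stab; case: eqVneq => //= nz; rewrite vsmul_eq.
have hF x : x \in StabPlusFlag Fl = Q x.
  apply: key.
  - by apply/forallP => i; apply: QU1.
  - by move=> a b /forallP Ha /forallP Hb; apply/forallP => i; apply: QUD.
  - by move=> a b /forallP Hb; apply/forallP => i; apply: QUZ.
  - by move=> a b /forallP Ha /forallP Hb; apply/forallP => i; apply: QUM.
  move=> y; rewrite /StabFlag; case: eqVneq => //= nz.
  by apply: eq_forallb => i; rewrite vsmul_eq.
split.
- move=> x; rewrite hF; case: eqVneq => [->|nz] /=.
    by apply/forallP => i; rewrite /QU -(scale0r 1); apply: QUZ.
  by rewrite /StabFlag nz /=; apply: eq_forallb => i; rewrite vsmul_eq.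
- apply/vspaceP => x; rewrite hF memvE; apply/forallP/subv_bigcapP => H i.
    by move=> _; rewrite -memvE hU.
  by have := H i isT; rewrite -memvE hU.
- by move=> i k u; rewrite hF => /forallP/(_ i)/vsmul_subP H Uu; rewrite mulrC H.
- move=> i0 i00 one i; apply/subvP => k.
  rewrite hF => /forallP/(_ i0)/vsmul_subP/(_ 1 one); rewrite mul1r => k0.
  case: (eqVneq i0 i) => [<-//|ne].
  have lt : (i0 < i)%N.
    rewrite i00 lt0n; apply/eqP => i0'; move/eqP: ne; apply.
    by apply/val_inj; rewrite /= i00 i0'.
  exact: (subvP (Hmono _ _ lt).1 _ k0).
Qed.
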